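(* Let $(X,d)$ be a compact metric space and $F:X\to 2^X$ an onto, continuous set-valued map. If $F$ has the shadowing property, then $F^{-1}$ also has the shadowing property.
   Context: $2^X$ is the family of nonempty compact subsets of $X$ with Hausdorff metric $d_H$. A set-valued map $F$ is upper semicontinuous if for every $x$ and open $U\supset F(x)$ there is a neighborhood $V$ of $x$ with $F(y)\subset U$ for $y\in V$; lower semicontinuous if for every $x$ and open $U$ with $F(x)\cap U\ne\emptyset$ there is a neighborhood $V$ of $x$ with $F(y)\cap U\neq\emptyset$ for $y\in V$; continuous if both. $F$ is onto if every $y\in X$ lies in $F(x)$ for some $x$; then $F^{-1}(y)=\{x: y\in F(x)\}$ defines a set-valued map $F^{-1}:X\to 2^X$. For a set-valued map $G$, a $\delta$-pseudo-orbit is a sequence $\{x_n\}_{n\ge0}$ with $d(x_{n+1},G(x_n))<\delta$ for all $n$; a $G$-orbit is a sequence $(y_n)$ with $y_{n+1}\in G(y_n)$ for all $n$; $G$ has the shadowing property if for every $\varepsilon>0$ there is $\delta>0$ such that every $\delta$-pseudo-orbit $\{x_n\}$ admits a $G$-orbit $(y_n)$ with $d(x_n,y_n)<\varepsilon$ for all $n$. *)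

(* Defs.v *)
From Stdlib Require Import Reals List.
Open Scope R_scope.

Record is_metric (X : Type) (d : X -> X -> R) : Prop := {
  metric_nonneg : forall x y, 0 <= d x y;
  metric_eq0 : forall x y, d x y = 0 <-> x = y;
  metric_sym : forall x y, d x y = d y x;
  metric_triangle : forall x y z, d x z <= d x y + d y z
}.

Definition open_set {X : Type} (d : X -> X -> R) (U : X -> Prop) : Prop :=
  forall x, U x -> exists r, 0 < r /\ forall y, d x y < r -> U y.

Definition compact_set {X : Type} (d : X -> X -> R) (K : X -> Prop) : Prop :=
  forall (I : Type) (U : I -> X -> Prop),
    (forall i, open_set d (U i)) ->
    (forall x, K x -> exists i, U i x) ->
    exists l : list I, forall x, K x -> exists i, In i l /\ U i x.

Definition compact_space {X : Type} (d : X -> X -> R) : Prop :=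
  compact_set d (fun _ => True).

(* A set-valued map G : X -> 2^X is represented by G : X -> (X -> Prop),
   with "G x y" meaning y ∈ G(x). *)

Definition values_in_2X {X : Type} (d : X -> X -> R) (G : X -> X -> Prop) : Prop :=
  forall x, (exists y, G x y) /\ compact_set d (G x).

(* A neighborhood V of x is a set containing a ball around x; we quantify
   directly over balls. *)
Definition usc {X : Type} (d : X -> X -> R) (G : X -> X -> Prop) : Prop :=
  forall x (U : X -> Prop), open_set d U -> (forall y, G x y -> U y) ->
    exists r, 0 < r /\ forall x', d x x' < r -> forall y, G x' y -> U y.

Definition lsc {X : Type} (d : X -> X -> R) (G : X -> X -> Prop) : Prop :=
  forall x (U : X -> Prop), open_set d U -> (exists y, G x y /\ U y) ->
    exists r, 0 < r /\ forall x', d x x' < r -> exists y, G x' y /\ U y.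

Definition continuous_sv {X : Type} (d : X -> X -> R) (G : X -> X -> Prop) : Prop :=
  usc d G /\ lsc d G.

Definition onto_sv {X : Type} (G : X -> X -> Prop) : Prop :=
  forall y, exists x, G x y.

Definition inverse_sv {X : Type} (G : X -> X -> Prop) : X -> X -> Prop :=
  fun y x => G x y.

(* d(x, A) < delta, where d(x,A) = inf_{a in A} d(x,a): for nonempty A this
   is exactly "some a in A has d(x,a) < delta". *)
Definition dist_set_lt {X : Type} (d : X -> X -> R) (x : X) (A : X -> Prop)
  (delta : R) : Prop :=
  exists a, A a /\ d x a < delta.

Definition pseudo_orbit {X : Type} (d : X -> X -> R) (G : X -> X -> Prop)
  (delta : R) (xs : nat -> X) : Prop :=
  forall n, dist_set_lt d (xs (S n)) (G (xs n)) delta.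

Definition orbit {X : Type} (G : X -> X -> Prop) (ys : nat -> X) : Prop :=
  forall n, G (ys n) (ys (S n)).

Definition shadowing {X : Type} (d : X -> X -> R) (G : X -> X -> Prop) : Prop :=
  forall eps, 0 < eps -> exists delta, 0 < delta /\
    forall xs, pseudo_orbit d G delta xs ->
      exists ys, orbit G ys /\ forall n, d (xs n) (ys n) < eps.

(* Main.v *)
Require Import Defs.
From Stdlib Require Import Reals.
From Stdlib Require Import Lra Lia List Classical ClassicalEpsilon Arith.
Require Import Defs.
Open Scope R_scope.

Definition conv {X} (d : X -> X -> R) (s : nat -> X) (p : X) : Prop :=
  forall r, 0 < r -> exists J, forall j, (J <= j)%nat -> d (s j) p < r.

Definition incr (f : nat -> nat) := forall i, (f i < f (S i))%nat.

Lemma incr_ge f : incr f -> forall i, (i <= f i)%nat.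
Proof. intros H i; induction i; [lia| specialize (H i); lia]. Qed.

Lemma incr_mono f : incr f -> forall i j, (i <= j)%nat -> (f i <= f j)%nat.
Proof. intros H i j Hij; induction Hij; [lia| specialize (H m); lia]. Qed.

Lemma incr_comp f g : incr f -> incr g -> incr (fun i => f (g i)).
Proof.
  intros Hf Hg i. apply Nat.lt_le_trans with (f (S (g i))). apply Hf.
  apply incr_mono; [exact Hf| apply Hg].
Qed.

Lemma conv_sub {X} d (s : nat -> X) p f : incr f -> conv d s p -> conv d (fun j => s (f j)) p.
Proof.
  intros Hf Hc r Hr. destruct (Hc r Hr) as [J HJ]. exists J. intros j Hj. apply HJ.
  pose proof (incr_ge f Hf j). lia.
Qed.

Lemma conv_ext {X} d (s s' : nat -> X) p : (forall j, s j = s' j) -> conv d s p -> conv d s' p.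
Proof. intros He Hc r Hr. destruct (Hc r Hr) as [J HJ]. exists J. intros j Hj. rewrite <- He. auto. Qed.

Lemma ball_open {X} d (Hm : is_metric X d) (q : X) (r : R) : open_set d (fun z => d q z < r).
Proof.
  intros x Hx. exists (r - d q x). split; [lra|]. intros y Hy.
  pose proof (metric_triangle _ _ Hm q x y). lra.
Qed.

Lemma far_open {X} d (Hm : is_metric X d) (b : X) (r : R) : open_set d (fun z => r < d b z).
Proof.
  intros x Hx. exists (d b x - r). split; [lra|]. intros y Hy.
  pose proof (metric_triangle _ _ Hm b y x) as H. rewrite (metric_sym _ _ Hm y x) in H. lra.
Qed.

Lemma inv_pos k : 0 < / (INR k + 1).
Proof. apply Rinv_0_lt_compat. pose proof (pos_INR k); lra. Qed.

Lemma inv_le k K : (k <= K)%nat -> / (INR K + 1) <= / (INR k + 1).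
Proof.
  intros H. apply Rinv_le_contravar. pose proof (pos_INR k); lra.
  apply Rplus_le_compat_r, le_INR, H.
Qed.

Lemma arch r : 0 < r -> exists N, / (INR N + 1) < r.
Proof.
  intros Hr. destruct (archimed_cor1 _ Hr) as [N [HN HN0]]. exists N.
  eapply Rle_lt_trans; [|exact HN]. apply Rinv_le_contravar. apply lt_0_INR; auto. lra.
Qed.

Lemma list_max_bound {A} (f : A -> nat) (l : list A) : exists M, forall t, In t l -> (f t <= M)%nat.
Proof.
  induction l as [|a l [M HM]]. exists 0%nat; intros t [].
  exists (Nat.max (f a) M). intros t [<-|Ht]; [lia| specialize (HM t Ht); lia].
Qed.

Lemma cluster {X} d (Hm : is_metric X d) (Hc : compact_space d) (s : nat -> X) :
  exists p, forall r, 0 < r -> forall N, exists j, (N <= j)%nat /\ d (s j) p < r.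
Proof.
  apply NNPP; intro Hno.
  set (Idx := {t : X * R * nat | 0 < snd (fst t) /\
     forall j, (snd t <= j)%nat -> snd (fst t) <= d (s j) (fst (fst t))}).
  destruct (Hc Idx (fun t x => d (fst (fst (proj1_sig t))) x < snd (fst (proj1_sig t)))) as [l Hl].
  - intros t. apply ball_open; auto.
  - intros x _.
    assert (H : exists r, 0 < r /\ exists N, forall j, (N <= j)%nat -> r <= d (s j) x).
    { apply NNPP; intro H. apply Hno. exists x. intros r Hr N. apply NNPP; intro H2.
      apply H. exists r; split; auto. exists N. intros j Hj. apply Rnot_lt_le. intro H3.
      apply H2. exists j; auto. }
    destruct H as [r [Hr [N HN]]].
    exists (exist _ (x, r, N) (conj Hr HN)). simpl.
    rewrite (proj2 (metric_eq0 _ _ Hm x x) eq_refl). exact Hr.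
  - destruct (list_max_bound (fun t : Idx => snd (proj1_sig t)) l) as [M HM].
    destruct (Hl (s M) Logic.I) as [t [Ht Hd]].
    specialize (HM t Ht). clear Ht.
    destruct t as [[[p r] N] [Hr HN]]. simpl in *. specialize (HN M HM).
    rewrite (metric_sym _ _ Hm) in HN. lra.
Qed.

Fixpoint build (g : nat -> nat -> nat) (i : nat) : nat :=
  match i with 0 => g 0%nat 0%nat | S i' => g (S (build g i')) (S i') end.

Lemma seq_compact {X} d (Hm : is_metric X d) (Hc : compact_space d) (s : nat -> X) :
  exists f p, incr f /\ conv d (fun j => s (f j)) p.
Proof.
  destruct (cluster d Hm Hc s) as [p Hp].
  assert (G : forall N i : nat, {j | (N <= j)%nat /\ d (s j) p < / (INR i + 1)}).
  { intros N i. apply constructive_indefinite_description. apply Hp. apply inv_pos. }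
  assert (Hg : exists g : nat -> nat -> nat, forall N i, (N <= g N i)%nat /\ d (s (g N i)) p < / (INR i + 1)).
  { exists (fun N i => proj1_sig (G N i)). intros N i. exact (proj2_sig (G N i)). }
  destruct Hg as [g Hg].
  exists (build g), p. split.
  - intro i. simpl. destruct (Hg (S (build g i)) (S i)). lia.
  - assert (Hb : forall i, d (s (build g i)) p < / (INR i + 1)).
    { intros [|i]; simpl; apply Hg. }
    intros r Hr. destruct (arch r Hr) as [N HN]. exists N. intros j Hj.
    eapply Rlt_le_trans; [apply Hb|]. eapply Rle_trans; [apply inv_le; exact Hj|]. lra.
Qed.

Lemma closed_graph {X} d F (Hm : is_metric X d) (Hv : values_in_2X d F) (Hu : usc d F)
  (a b : nat -> X) pa pb J : conv d a pa -> conv d b pb ->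
  (forall j, (J <= j)%nat -> F (a j) (b j)) -> F pa pb.
Proof.
  intros Ha Hb HF. apply NNPP; intro Hn.
  destruct (proj2 (Hv pa) nat (fun k z => / (INR k + 1) < d pb z)) as [l Hl].
  - intro k. apply far_open; auto.
  - intros z Hz. assert (Hpos : 0 < d pb z).
    { destruct (metric_nonneg _ _ Hm pb z) as [H|H]; auto. exfalso. symmetry in H.
      apply (metric_eq0 _ _ Hm) in H. subst. contradiction. }
    destruct (arch _ Hpos) as [k Hk]. exists k. exact Hk.
  - destruct (list_max_bound (fun k => k) l) as [K HK].
    assert (HU : forall z, F pa z -> / (INR K + 1) < d pb z).
    { intros z Hz. destruct (Hl z Hz) as [k [Hk Hd]]. eapply Rle_lt_trans; [|exact Hd].
      apply inv_le. apply HK; auto. }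
    destruct (Hu pa _ (far_open d Hm pb (/ (INR K + 1))) HU) as [r [Hr Hr']].
    destruct (Ha r Hr) as [J1 HJ1].
    destruct (Hb _ (inv_pos K)) as [J2 HJ2].
    set (j := (J + J1 + J2)%nat).
    assert (H1 : d pa (a j) < r). { rewrite (metric_sym _ _ Hm). apply HJ1. unfold j; lia. }
    specialize (Hr' (a j) H1 (b j) (HF j ltac:(unfold j; lia))).
    specialize (HJ2 j ltac:(unfold j; lia)). rewrite (metric_sym _ _ Hm) in HJ2. lra.
Qed.

Lemma unif_lsc {X} d F (Hm : is_metric X d) (Hc : compact_space d) (Hv : values_in_2X d F)
  (HF : continuous_sv d F) eta : 0 < eta ->
  exists delta, 0 < delta /\ forall a b u, d a b < delta -> F a u -> exists v, F b v /\ d u v < eta.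
Proof.
  intros He. apply NNPP; intro Hno.
  assert (Hk : forall k : nat, exists t : X * X * X, d (fst (fst t)) (snd (fst t)) < / (INR k + 1)
     /\ F (fst (fst t)) (snd t) /\ forall v, F (snd (fst t)) v -> eta <= d (snd t) v).
  { intro k. apply NNPP; intro H. apply Hno. exists (/ (INR k + 1)). split. apply inv_pos.
    intros a b u Hab Hau. apply NNPP; intro H2. apply H. exists (a, b, u). simpl.
    split; [auto|split; auto]. intros v Hv'. apply Rnot_lt_le. intro H3. apply H2. exists v; auto. }
  assert (Ht : exists t : nat -> X * X * X, forall k, d (fst (fst (t k))) (snd (fst (t k))) < / (INR k + 1)
     /\ F (fst (fst (t k))) (snd (t k)) /\ forall v, F (snd (fst (t k))) v -> eta <= d (snd (t k)) v).
  { exists (fun k => proj1_sig (constructive_indefinite_description _ (Hk k))).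
    intro k. exact (proj2_sig (constructive_indefinite_description _ (Hk k))). }
  clear Hk. destruct Ht as [t Ht].
  set (a := fun k => fst (fst (t k))). set (b := fun k => snd (fst (t k))).
  set (u := fun k => snd (t k)).
  destruct (seq_compact d Hm Hc a) as [f1 [p [Hf1 Hp]]].
  destruct (seq_compact d Hm Hc (fun j => u (f1 j))) as [f2 [q [Hf2 Hq]]].
  set (f := fun j => f1 (f2 j)).
  assert (Hf : incr f) by exact (incr_comp _ _ Hf1 Hf2).
  assert (Hap : conv d (fun j => a (f j)) p) by (apply (conv_sub d (fun j => a (f1 j)) p f2); auto).
  assert (Hbp : conv d (fun j => b (f j)) p).
  { intros r Hr. destruct (Hap (r/2)) as [J HJ]; [lra|]. destruct (arch (r/2)) as [N HN]; [lra|].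
    exists (J + N)%nat. intros j Hj.
    pose proof (metric_triangle _ _ Hm (b (f j)) (a (f j)) p).
    rewrite (metric_sym _ _ Hm (b (f j)) (a (f j))) in H.
    specialize (HJ j ltac:(lia)).
    assert (d (a (f j)) (b (f j)) < / (INR (f j) + 1)) by (apply Ht).
    assert (/ (INR (f j) + 1) <= / (INR N + 1)).
    { apply inv_le. pose proof (incr_ge f Hf j). lia. }
    lra. }
  assert (Hpq : F p q).
  { apply (closed_graph d F Hm Hv (proj1 HF) (fun j => a (f j)) (fun j => u (f j)) p q 0%nat); auto.
    intros j _. apply Ht. }
  destruct (proj2 HF p (fun z => d q z < eta / 2) (ball_open d Hm q (eta/2))) as [r [Hr Hr']].
  { exists q. split; auto. rewrite (proj2 (metric_eq0 _ _ Hm q q) eq_refl). lra. }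
  destruct (Hbp r Hr) as [J1 HJ1]. destruct (Hq (eta/2)) as [J2 HJ2]; [lra|].
  set (j := (J1 + J2)%nat).
  specialize (HJ1 j ltac:(unfold j; lia)). specialize (HJ2 j ltac:(unfold j; lia)).
  rewrite (metric_sym _ _ Hm) in HJ1.
  destruct (Hr' _ HJ1) as [v [Hv1 Hv2]].
  destruct (Ht (f j)) as [_ [_ H3]]. specialize (H3 v Hv1).
  pose proof (metric_triangle _ _ Hm (u (f j)) q v). unfold f, u in *. simpl in *. lra.
Qed.

Fixpoint phi {X} (sub : (nat -> X) -> nat -> nat) (W : nat -> nat -> X) (k : nat) : nat -> nat :=
  match k with
  | 0 => fun i => sub (fun j => W j 0%nat) i
  | S k' => fun i => phi sub W k' (sub (fun j => W (phi sub W k' j) (S k')) i)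
  end.

Definition prev {X} (sub : (nat -> X) -> nat -> nat) (W : nat -> nat -> X) (k : nat) : nat -> nat :=
  match k with 0 => fun j => j | S k' => phi sub W k' end.

Lemma diagonal {X} d F (Hm : is_metric X d) (Hc : compact_space d) (Hv : values_in_2X d F)
  (Hu : usc d F) (xs : nat -> X) e (W : nat -> nat -> X) :
  (forall N n, (n < N)%nat -> F (W N (S n)) (W N n)) ->
  (forall N n, (n <= N)%nat -> d (xs n) (W N n) <= e) ->
  exists ys, (forall n, F (ys (S n)) (ys n)) /\ forall n, d (xs n) (ys n) <= e.
Proof.
  intros HW Hd.
  assert (Hs : forall s : nat -> X, exists fp : (nat -> nat) * X,
     incr (fst fp) /\ conv d (fun j => s (fst fp j)) (snd fp)).
  { intro s. destruct (seq_compact d Hm Hc s) as [f [p H]]. exists (f, p). exact H. }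
  assert (Hsl : exists (sub : (nat -> X) -> nat -> nat) (lim : (nat -> X) -> X),
     forall s, incr (sub s) /\ conv d (fun j => s (sub s j)) (lim s)).
  { exists (fun s => fst (proj1_sig (constructive_indefinite_description _ (Hs s)))).
    exists (fun s => snd (proj1_sig (constructive_indefinite_description _ (Hs s)))).
    intro s. exact (proj2_sig (constructive_indefinite_description _ (Hs s))). }
  clear Hs. destruct Hsl as [sub [lim Hsl]].
  set (sk := fun k j => W (prev sub W k j) k).
  set (y := fun k => lim (sk k)).
  assert (Hphi : forall k i, phi sub W k i = prev sub W k (sub (sk k) i)).
  { intros [|k] i; reflexivity. }
  assert (Hinc : forall k, incr (phi sub W k)).
  { induction k. simpl. apply Hsl. intro i. simpl. apply (incr_comp _ _ IHk (proj1 (Hsl _))). }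
  assert (Hconv : forall k, conv d (fun j => W (phi sub W k j) k) (y k)).
  { intro k. apply (conv_ext d (fun j => sk k (sub (sk k) j))).
    intro j. rewrite Hphi. reflexivity. apply Hsl. }
  assert (Hfac : forall k m, (k <= m)%nat -> exists g, incr g /\ forall i, phi sub W m i = phi sub W k (g i)).
  { intros k m Hkm. induction Hkm.
    - exists (fun i => i). split; [intro; lia| reflexivity].
    - destruct IHHkm as [g [Hg Hg']].
      exists (fun i => g (sub (fun j => W (phi sub W m j) (S m)) i)). split.
      apply incr_comp; auto. apply Hsl.
      intro i. simpl. apply Hg'. }
  assert (Hconv2 : forall k m, (k <= m)%nat -> conv d (fun j => W (phi sub W m j) k) (y k)).
  { intros k m Hkm. destruct (Hfac k m Hkm) as [g [Hg Hg']].
    apply (conv_ext d (fun j => W (phi sub W k (g j)) k)).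
    intro j. rewrite Hg'. reflexivity.
    apply (conv_sub d (fun j => W (phi sub W k j) k)); auto. }
  exists y. split.
  - intro n.
    apply (closed_graph d F Hm Hv Hu (fun j => W (phi sub W (S n) j) (S n))
             (fun j => W (phi sub W (S n) j) n) _ _ (S n)).
    apply Hconv2; lia. apply Hconv2; lia.
    intros j Hj. apply HW. pose proof (incr_ge _ (Hinc (S n)) j). lia.
  - intro n. apply Rnot_lt_le. intro Hlt.
    destruct (Hconv n (d (xs n) (y n) - e)) as [J HJ]; [lra|].
    specialize (HJ (J + n)%nat ltac:(lia)).
    assert (H1 : d (xs n) (W (phi sub W n (J + n)%nat) n) <= e).
    { apply Hd. pose proof (incr_ge _ (Hinc n) (J + n)%nat). lia. }
    pose proof (metric_triangle _ _ Hm (xs n) (W (phi sub W n (J + n)%nat) n) (y n)). lra.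
Qed.

Theorem theorem4p7 (X : Type) (d : X -> X -> R) (F : X -> X -> Prop) :
  is_metric X d -> compact_space d ->
  values_in_2X d F -> onto_sv F -> continuous_sv d F ->
  shadowing d F -> shadowing d (inverse_sv F).
Proof.
  intros Hm Hc Hv Hon HF Hsh eps Heps.
  destruct (Hsh (eps/2)) as [d1 [Hd1 Hsh1]]; [lra|].
  destruct (unif_lsc d F Hm Hc Hv HF d1 Hd1) as [del [Hdel Hul]].
  exists del. split; auto. intros xs Hxs.
  assert (Hch : exists c : X -> X, forall x, F x (c x)).
  { exists (fun x => proj1_sig (constructive_indefinite_description _ (proj1 (Hv x)))).
    intro x. exact (proj2_sig (constructive_indefinite_description _ (proj1 (Hv x)))). }
  destruct Hch as [c Hcf].
  set (z := fun N k => if Nat.leb k N then xs (N - k)%nat else Nat.iter (k - N) c (xs 0%nat)).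
  assert (Hz1 : forall N k, (k <= N)%nat -> z N k = xs (N - k)%nat).
  { intros N k H. unfold z. apply Nat.leb_le in H. rewrite H. reflexivity. }
  assert (Hz2 : forall N k, (N <= k)%nat -> z N k = Nat.iter (k - N) c (xs 0%nat)).
  { intros N k H. unfold z. destruct (Nat.leb k N) eqn:E.
    - apply Nat.leb_le in E. assert (k = N) by lia. subst. rewrite Nat.sub_diag. reflexivity.
    - reflexivity. }
  assert (Hpo : forall N, pseudo_orbit d F d1 (z N)).
  { intros N k. unfold dist_set_lt.
    destruct (Nat.lt_ge_cases k N) as [H|H].
    - rewrite (Hz1 N k) by lia. rewrite (Hz1 N (S k)) by lia.
      set (m := (N - S k)%nat). replace (N - k)%nat with (S m) by (unfold m; lia).
      destruct (Hxs m) as [a [Ha1 Ha2]]. unfold inverse_sv in Ha1.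
      rewrite (metric_sym _ _ Hm) in Ha2.
      destruct (Hul a (xs (S m)) (xs m) Ha2 Ha1) as [v [Hv1 Hv2]]. exists v. auto.
    - rewrite (Hz2 N k) by lia. rewrite (Hz2 N (S k)) by lia.
      replace (S k - N)%nat with (S (k - N)) by lia. simpl.
      exists (c (Nat.iter (k - N) c (xs 0%nat))). split. apply Hcf.
      rewrite (proj2 (metric_eq0 _ _ Hm _ _) eq_refl). lra. }
  assert (Hw : forall N, exists w, orbit F w /\ forall n, d (z N n) (w n) < eps/2).
  { intro N. apply Hsh1, Hpo. }
  assert (HW : exists W' : nat -> nat -> X, forall N, orbit F (W' N) /\ forall n, d (z N n) (W' N n) < eps/2).
  { exists (fun N => proj1_sig (constructive_indefinite_description _ (Hw N))).
    intro N. exact (proj2_sig (constructive_indefinite_description _ (Hw N))). }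
  destruct HW as [W' HW'].
  destruct (diagonal d F Hm Hc Hv (proj1 HF) xs (eps/2) (fun N n => W' N (N - n)%nat)) as [ys [Hy1 Hy2]].
  - intros N n Hn. simpl. replace (N - n)%nat with (S (N - S n)) by lia. apply HW'.
  - intros N n Hn. simpl. destruct (HW' N) as [_ H]. specialize (H (N - n)%nat).
    rewrite Hz1 in H by lia. replace (N - (N - n))%nat with n in H by lia. lra.
  - exists ys. split.
    + intro n. unfold inverse_sv. apply Hy1.
    + intro n. specialize (Hy2 n). lra.
Qed.
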